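(* Let $q=p^m$ with $p$ an odd prime and $m\ge1$, and for $b\in\mathbb{F}_{q^2}$ let $\delta(b)=\#\{u\in\mathbb{F}_{q^2}:\ 2u^{q+1}+u^2=b\}$. Then $\delta(0)=q$ if $p=3$, and $\delta(0)=1$ otherwise.
   Context: $\delta(b)$ equals $\delta_f(1,b+\tfrac14)$ for $f(x)=x^{q+2}$, where $\delta_f(a,b)=\#\{x\in\mathbb{F}_{q^2}: f(x+a)-f(x)=b\}$. *)

(* Defs.v *)
From mathcomp Require Import all_boot all_algebra all_field.
Set Implicit Arguments. Unset Strict Implicit. Unset Printing Implicit Defensive.
Import GRing.Theory.
Local Open Scope ring_scope.

Definition delta {F : finFieldType} (q : nat) (b : F) : nat :=
  #|[set u : F | 2 * u ^+ q.+1 + u ^+ 2 == b]|.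

(* Main.v *)
Require Import Defs.
From mathcomp Require Import all_boot all_algebra all_field.
From mathcomp Require Import ring.
Import GRing.Theory.
Local Open Scope ring_scope.
Section S.
Variable F : finFieldType.
Lemma card_roots_lt (P : {poly F}) : P != 0 -> (#|[set x | root P x]| < size P)%N.
Proof.
move=> nz; rewrite cardE; apply: max_poly_roots nz _ (enum_uniq _).
by apply/allP => x; rewrite mem_enum inE.
Qed.
Lemma sz1 (q : nat) (v : F) : (1 < q)%N -> size ('X^q + 'X - v%:P : {poly F}) = q.+1.
Proof. move=> h; rewrite -addrA size_addl ?size_polyXn // size_XsubC //. Qed.
Lemma sz2 (q : nat) : (1 < q)%N -> size ('X^q - 'X : {poly F}) = q.+1.
Proof. move=> h; rewrite size_addl ?size_polyXn // size_opp size_polyX //. Qed.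
Variables (p m : nat).
Hypotheses (hp : prime p) (hodd : odd p) (hm : (0 < m)%N) (hc : p \in [pchar F])
  (hcard : #|F| = ((p ^ m) ^ 2)%N).
Local Notation q := (p ^ m)%N.
Lemma hqnat : [pchar F].-nat q.
Proof. by rewrite (eq_pnat _ (pcharf_eq hc)) pnatX pnat_id. Qed.
Lemma frobD (x y : F) : (x + y) ^+ q = x ^+ q + y ^+ q.
Proof. exact: exprDn_pchar hqnat. Qed.
Lemma frobN (x : F) : (- x) ^+ q = - x ^+ q.
Proof. exact: exprNn_pchar hqnat. Qed.
Lemma frob2 (x : F) : (x ^+ q) ^+ q = x.
Proof. by rewrite -exprM mulnn -hcard expf_card. Qed.
Lemma q_gt1 : (1 < q)%N.
Proof. by rewrite -(expn0 p) ltn_exp2l ?prime_gt1. Qed.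
Lemma two_q : (2 : F) ^+ q = 2.
Proof. by rewrite -[2]/(1 + 1 : F) frobD expr1n. Qed.

Lemma case_n3 : p != 3 -> #|[set u : F | 2 * u ^+ q.+1 + u ^+ 2 == 0]| = 1%N.
Proof.
move=> hp3; suff -> : [set u : F | 2 * u ^+ q.+1 + u ^+ 2 == 0] = [set 0] by rewrite cards1.
apply/setP => u; rewrite !inE.
have [->|u0] := eqVneq u 0; first by rewrite !expr0n /= mulr0 addr0 eqxx.
apply/negbTE/negP => /eqP h.
set b := u ^+ q.
have e1 : 2 * b = - u.
  have : u * (2 * b + u) = 0 by rewrite -h exprS expr2 /b; ring.
  by move/eqP; rewrite mulf_eq0 (negbTE u0) /= addr_eq0 => /eqP.
have e2 : 2 * u = - b.
  by have := congr1 (fun x => x ^+ q) e1; rewrite /= exprMn two_q frob2 frobN.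
have e3 : 3%:R * b = 0.
  have -> : 3%:R * b = 2 * (2 * b) - b by ring.
  rewrite e1; have -> : 2 * (- u) = - (2 * u) by ring.
  by rewrite e2 opprK subrr.
move/eqP: e3; rewrite mulf_eq0 expf_eq0 (negbTE u0) andbF orbF -(dvdn_pcharf hc).
by rewrite dvdn_prime2 // (negbTE hp3).
Qed.

Lemma case3 : p = 3 -> #|[set u : F | 2 * u ^+ q.+1 + u ^+ 2 == 0]| = q.
Proof.
move=> p3.
have h3 : (3%:R : F) = 0 by move: (pcharf0 hc); rewrite p3.
have h2 : (2 : F) = -1.
  by apply/eqP; rewrite -subr_eq0 opprK -mulrSr h3.
have -> : [set u : F | 2 * u ^+ q.+1 + u ^+ 2 == 0] = [set u | root ('X^q - 'X) u].
  apply/setP => u; rewrite !inE /root !hornerE h2.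
  have [->|u0] := eqVneq u 0; first by rewrite !expr0n /= eqn0Ngt (ltnW q_gt1) /= mulr0 addr0 subr0 eqxx.
  have -> : -1 * u^+q.+1 + u^+2 = u * (-(u^+q - u)) by rewrite exprS expr2; ring.
  by rewrite mulf_eq0 (negbTE u0) oppr_eq0.
set K := [set u | root _ u].
have q1 := q_gt1.
apply/eqP; rewrite eqn_leq; apply/andP; split.
  by rewrite -ltnS -(sz2 q q1) card_roots_lt // -size_poly_gt0 (sz2 q q1).
have : (#|F| <= #|K| * q)%N.
  rewrite -[#|F|]sum1_card (partition_big (fun u => u + u^+q) (mem K)) /=.
rewrite -sum_nat_const; apply: leq_sum => v vK.
    rewrite sum1_card -ltnS -(sz1 q v q1).
    apply: (@leq_ltn_trans #|[set x | root ('X^q + 'X - v%:P) x]|); last first.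
      by apply: card_roots_lt; rewrite -size_poly_gt0 (sz1 q v q1).
    apply: subset_leq_card; apply/subsetP => x; rewrite !inE /root !hornerE => /eqP <-.
    by rewrite [x + _]addrC subrr.
  move=> u _; rewrite inE /root !hornerE frobD frob2 [u + _]addrC subrr eqxx //.
move=> h; rewrite -(leq_pmul2r (ltnW q1)) mulnn -hcard; exact h.
Qed.
End S.

Theorem proposition3 (p m : nat) (F : finFieldType) :
  prime p -> odd p -> (0 < m)%N -> p \in [pchar F] -> #|F| = ((p ^ m) ^ 2)%N ->
  delta (p ^ m) (0 : F) = (if (p == 3)%N then (p ^ m)%N else 1%N).
Proof.
move=> hp hodd hm hc hcard; rewrite /delta.
case: eqP => [p3|/eqP hp3].
  by apply: case3.
by apply: case_n3.
Qed.
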